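(* Let $n$ be an odd positive integer and let $i_1,\dots,i_s$ with $0\le i_1<\dots<i_s\le n-1$ be integers no two of which belong to the same cyclotomic coset modulo $n$. Let $g$ be a positive integer with $(2^g-1)\mid n$. Suppose there exists an integer $r$ with $0<r<2^g-1$ and $\gcd(r,2^g-1)=1$ such that all of $i_1,\dots,i_s$ lie in $\mathcal{C}_r^{(2^g-1)}$, i.e. each $i_t \bmod (2^g-1)$ belongs to $\{r2^k\bmod(2^g-1):k\ge0\}$. Then the binary cyclic code of length $n$ with generator polynomial $\prod_{t=1}^{s}M_{i_t}(x)$ has minimum distance $d\le 3$. If moreover $\gcd(n,i_1,\dots,i_s)=1$, then $d=3$.
   Context: For odd $n$, $\alpha$ denotes a primitive $n$th root of unity in an extension field of $\mathbb{F}_2$. The cyclotomic coset of $r$ modulo $N$ (over $\mathbb{F}_2$) is $\mathcal{C}_r^{(N)}=\{r2^k \bmod N: k=0,1,\dots\}$. $M_i(x)=\prod_{t\in\mathcal{C}_i^{(n)}}(x-\alpha^t)\in\mathbb{F}_2[x]$ is the minimal polynomial of $\alpha^i$. The binary cyclic code with generator polynomial $G(x)\mid x^n-1$ is $\{c(x)\in\mathbb{F}_2[x]/(x^n-1): G(x)\mid c(x)\}$. *)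

(* Defs.v *)
From HB Require Import structures.
From mathcomp Require Import all_boot all_order all_algebra.
Set Implicit Arguments. Unset Strict Implicit. Unset Printing Implicit Defensive.
Import GRing.Theory.
Local Open Scope ring_scope.

(* Since the multiplicative order of 2 mod odd N is <= N, it
   suffices to let k range over 0..N-1 (for N >= 1). *)
Definition in_cyc_coset (N r j : nat) : bool :=
  [exists k : 'I_N, ((r * 2 ^ k) %% N == j)%N].

Definition minpoly_i (F : fieldType) (alpha : F) (n i : nat) : {poly F} :=
  \prod_(t < n | in_cyc_coset n i t) ('X - (alpha ^+ t)%:P).

(* A binary word of length n and its polynomial c(x) = sum_j c_j x^j
   (the representative of degree < n in F_2[x]/(x^n-1), viewed in F[x]). *)
Definition word_poly (F : fieldType) (n : nat) (c : {ffun 'I_n -> bool}) : {poly F} :=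
  \sum_(j < n) (nat_of_bool (c j))%:R *: 'X^j.

Definition cyclic_code (F : fieldType) (n : nat) (G : {poly F}) : {set {ffun 'I_n -> bool}} :=
  [set c : {ffun 'I_n -> bool} | G %| word_poly F c].

Definition weight (n : nat) (c : {ffun 'I_n -> bool}) : nat := #|[set j | c j]|.

(* Minimum (Hamming) distance = minimum weight of a nonzero codeword
   (convention: n if the code has no nonzero codeword). *)
Definition min_dist (n : nat) (C : {set {ffun 'I_n -> bool}}) : nat :=
  \big[minn/n]_(c in C | c != [ffun => false]) weight c.

(* Main.v *)
Require Import Defs.
From HB Require Import structures.
From mathcomp Require Import all_boot all_order all_algebra all_fingroup all_solvable.

Lemma totient_le n : totient n <= n.
Proof.
rewrite totient_count_coprime.
have := @leq_sum _ (index_iota 0 n) xpredT (fun i => nat_of_bool (coprime n i)) (fun _ => 1) (fun i _ => leq_b1 _).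
by rewrite sum_nat_const_nat muln1 subn0.
Qed.

Lemma pow2_phi n q : odd n -> 2 ^ (q * totient n) = 1 %[mod n].
Proof.
move=> on; have c2 : coprime 2 n by rewrite coprime_sym coprimen2.
by rewrite mulnC expnM -modnXm Euler_exp_totient // modnXm exp1n.
Qed.

Lemma pow2_mod n x : odd n -> 2 ^ x = 2 ^ (x %% totient n) %[mod n].
Proof.
move=> on.
by rewrite {1}(divn_eq x (totient n)) expnD -modnMml pow2_phi // modnMml mul1n.
Qed.

Lemma coset_trans n a b t (on : odd n) : b < n ->
  in_cyc_coset n a t -> in_cyc_coset n b t -> in_cyc_coset n a b.
Proof.
move=> bn /existsP[k /eqP Hk] /existsP[l /eqP Hl].
have n0 : 0 < n by case: (n) on bn.
set ph := totient n.
have ph0 : 0 < ph by rewrite totient_gt0.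
have K : (k + l * ph.-1) %% ph < n.
  by apply: leq_trans (totient_le n); rewrite ltn_mod.
apply/existsP; exists (Ordinal K); apply/eqP => /=.
have c2 : coprime 2 n by rewrite coprime_sym coprimen2.
rewrite -modnMmr -pow2_mod // modnMmr.
rewrite -[b](modn_small bn).
have -> : b = b * 2 ^ (l * ph) %[mod n].
  by rewrite -modnMmr pow2_phi // modnMmr muln1.
have -> : l * ph = l + l * ph.-1.
  by rewrite -{2}(muln1 l) -mulnDr add1n prednK.
by rewrite [in RHS]expnD mulnA -[RHS]modnMml Hl -Hk modnMml -mulnA -expnD.
Qed.

Import GRing.Theory.
Local Open Scope ring_scope.

Lemma prod_disj (R : comRingType) s n (P : 'I_s -> 'I_n -> bool) (G : 'I_n -> R)
  (disj : forall a b t, P a t -> P b t -> a = b) :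
  \prod_(a < s) \prod_(t < n | P a t) G t = \prod_(t < n | [exists a, P a t]) G t.
Proof.
rewrite (eq_bigr (fun a => \prod_(t < n) (if P a t then G t else 1)));
  last by move=> a _; rewrite big_mkcond.
rewrite exchange_big [RHS]big_mkcond; apply: eq_bigr => t _.
case: existsP => [[a Ha]|Hn].
  rewrite (bigD1 a) //= Ha big1 ?mulr1 // => b Hb.
  case: ifP => // Hbt; by rewrite (disj _ _ _ Hbt Ha) eqxx in Hb.
by rewrite big1 // => a _; case: ifP => // Ha; case: Hn; exists a.
Qed.

Lemma prod_dvd (F : fieldType) n (alpha : F) (Q : pred 'I_n) (p : {poly F}) :
  n.-primitive_root alpha ->
  (forall t : 'I_n, Q t -> root p (alpha ^+ t)) ->
  \prod_(t < n | Q t) ('X - (alpha ^+ t)%:P) %| p.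
Proof.
move=> pr Hr.
have H1 : all (root p) [seq alpha ^+ val t | t <- enum Q].
  apply/allP => x /mapP[t]; rewrite mem_enum => Qt ->; exact: Hr.
have H2 : uniq_roots [seq alpha ^+ val t | t <- enum Q].
  rewrite uniq_rootsE map_inj_in_uniq ?enum_uniq // => t u _ _ /eqP.
  rewrite (eq_prim_root_expr pr) !modn_small ?ltn_ord // => /eqP; exact: val_inj.
have [q ->] := uniq_roots_prod_XsubC H1 H2.
rewrite big_map big_enum /=; exact: dvdp_mull.
Qed.

Lemma frob (F : fieldType) (charF : (2 \in [pchar F])%N) (x y : F) K :
  (x + y) ^+ (2 ^ K) = x ^+ (2 ^ K) + y ^+ (2 ^ K).
Proof. by apply: exprDn_pchar; rewrite pnatX (pnatE _ (isT : prime 2)) charF. Qed.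

Lemma word_polyE (F : fieldType) n (c : {ffun 'I_n -> bool}) :
  word_poly F c = \sum_(j in [set j | c j]) 'X^j.
Proof.
rewrite /word_poly [RHS]big_mkcond; apply: eq_bigr => j _; rewrite inE.
by case: (c j); rewrite /= ?scale1r ?scale0r.
Qed.

Lemma word_poly_horner (F : fieldType) n (c : {ffun 'I_n -> bool}) x :
  (word_poly F c).[x] = \sum_(j in [set j | c j]) x ^+ j.
Proof.
by rewrite word_polyE horner_sum; apply: eq_bigr => j _; rewrite hornerXn.
Qed.

Lemma no_weight2 n s (I : 'I_s -> nat) (j k : nat) :
  coprime n (\big[gcdn/0%N]_(a < s) I a) -> (j < k)%N -> (k < n)%N ->
  (forall a, I a * j = I a * k %[mod n])%N -> False.
Proof.
move=> cop jk kn E.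
have : (n %| (\big[gcdn/0%N]_(a < s) I a) * (k - j))%N.
  elim/big_ind: _ => [|x y hx hy|a _]; first by rewrite mul0n dvdn0.
    by rewrite muln_gcdl dvdn_gcd hx hy.
  by rewrite mulnBr -eqn_mod_dvd ?leq_mul2l ?(ltnW jk) ?orbT // E.
rewrite Gauss_dvdr // => /dvdn_leq; rewrite subn_gt0 => /(_ jk).
by rewrite leqNgt (leq_ltn_trans (leq_subr _ _) kn).
Qed.

Lemma bigmin_le (T : eqType) (r : seq T) (P : pred T) (F : T -> nat) x0 x :
  x \in r -> P x -> (\big[minn/x0]_(y <- r | P y) F y <= F x)%N.
Proof.
elim: r => // y r IH; rewrite inE big_cons => /orP[/eqP <- Px|xr Px].
  by rewrite Px geq_minl.
case: ifP => _; last exact: IH.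
by rewrite (leq_trans (geq_minr _ _)) // IH.
Qed.

Theorem theorem4 (F : fieldType) (charF : (2 \in [pchar F])%N)
  (n : nat) (alpha : F) (n_odd : odd n) (n_pos : (0 < n)%N)
  (alpha_prim : n.-primitive_root alpha)
  (s : nat) (s_pos : (0 < s)%N) (i : 'I_s -> nat)
  (i_lt_n : forall a, (i a < n)%N)
  (i_incr : forall a b : 'I_s, (a < b)%N -> (i a < i b)%N)
  (i_cosets : forall a b : 'I_s, a != b -> ~~ in_cyc_coset n (i a) (i b))
  (g : nat) (g_pos : (0 < g)%N) (g_div : (2 ^ g - 1 %| n)%N)
  (r : nat) (r_pos : (0 < r)%N) (r_lt : (r < 2 ^ g - 1)%N)
  (r_cop : coprime r (2 ^ g - 1))
  (i_in_r : forall a, in_cyc_coset (2 ^ g - 1) r (i a %% (2 ^ g - 1))) :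
  let C := cyclic_code n (\prod_(a < s) minpoly_i alpha n (i a)) in
  (min_dist C <= 3)%N /\
  (gcdn n (\big[gcdn/0%N]_(a < s) i a) = 1%N -> min_dist C = 3%N).
Proof.
move=> C.
set G := \prod_(a < s) minpoly_i alpha n (i a).
have GE : G = \prod_(t < n | [exists a, in_cyc_coset n (i a) t]) ('X - (alpha ^+ t)%:P).
  rewrite /G /minpoly_i; apply: prod_disj => a b t Ha Hb.
  apply/eqP; apply: contraT => ab; move: (i_cosets _ _ ab).
  by rewrite (@coset_trans n _ _ t n_odd (i_lt_n b) Ha Hb).
have Gdvd : forall p : {poly F},
   (forall t : 'I_n, [exists a, in_cyc_coset n (i a) t] -> root p (alpha ^+ t)) ->
   G %| p.
  by move=> p Hp; rewrite GE; apply: prod_dvd.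
have rootG : forall (p : {poly F}) a, G %| p -> root p (alpha ^+ i a).
  move=> p a Gp; rewrite -dvdp_XsubCl; apply: dvdp_trans Gp.
  rewrite GE (bigD1 (Ordinal (i_lt_n a))) /= ?dvdp_mulIl //.
  apply/existsP; exists a; apply/existsP; exists (Ordinal n_pos).
  by rewrite /= expn0 muln1 modn_small.
set m := (2 ^ g - 1)%N.
have m2 : (1 < m)%N by apply: leq_ltn_trans r_lt.
have g2 : (1 < g)%N.
  by move: m2; rewrite /m; case: (g) => [|[|k]].
have m3 : (3 <= m)%N.
  rewrite /m; have : (2 ^ 2 <= 2 ^ g)%N by rewrite leq_exp2l.
  by move=> h; rewrite ltn_subRL (leq_trans _ h).
have mn : (m <= n)%N by apply: dvdn_leq.
set q := (n %/ m)%N.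
have nq : n = (q * m)%N by rewrite divnK.
have q0 : (0 < q)%N by rewrite divn_gt0 ?(leq_trans _ m3).
set beta := alpha ^+ q.
have beta_prim : m.-primitive_root beta by apply: dvdn_prim_root.
set gam := beta ^+ r.
have gam_prim : m.-primitive_root gam by rewrite prim_root_exp_coprime.
have gam1 : gam != 1.
  apply/negP => /eqP h; move: (eq_prim_root_expr gam_prim 1 0).
  by rewrite expr1 expr0 h eqxx mod0n modn_small.
have gam0 : gam != 0.
  apply/negP => /eqP h; have := prim_expr_order gam_prim.
  rewrite h expr0n; have -> : (m == 0%N) = false by case: (m) m2.
  by move=> /eqP; rewrite eq_sym oner_eq0.
have opg0 : 1 + gam != 0.
  apply: contra gam1; rewrite addr_eq0 => /eqP ->; by rewrite oppr_pchar2.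
have gamg : gam ^+ (2 ^ g) = gam.
  have -> : (2 ^ g = m.+1)%N by rewrite /m subn1 prednK ?expn_gt0.
  by rewrite exprS prim_expr_order // mulr1.
have opgm : (1 + gam) ^+ m = 1.
  apply: (mulIf opg0); rewrite mul1r -exprSr.
  have <- : (2 ^ g = m.+1)%N by rewrite /m subn1 prednK ?expn_gt0.
  by rewrite frob // expr1n gamg.
have [w wE] := prim_rootP gam_prim opgm.
have w0 : (w != 0 :> nat)%N.
  apply/negP => /eqP h; move: wE; rewrite h expr0 => /eqP.
  by rewrite addrC -subr_eq0 addrK (negPf gam0).
have w1 : (w != 1 :> nat)%N.
  apply/negP => /eqP h; move: wE; rewrite h expr1 => /eqP.
  by rewrite -subr_eq0 addrK oner_eq0.
have qwn : (q * w < n)%N by rewrite nq ltn_pmul2l.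
have qn : (q < n)%N by apply: leq_ltn_trans qwn; rewrite leq_pmulr // lt0n.
set o0 : 'I_n := Ordinal n_pos.
set o1 : 'I_n := Ordinal qn.
set o2 : 'I_n := Ordinal qwn.
have o01 : o0 != o1 by rewrite -val_eqE /= eq_sym -lt0n.
have o02 : o0 != o2 by rewrite -val_eqE /= eq_sym muln_eq0 negb_or -!lt0n q0 lt0n.
have o12 : o1 != o2.
  by rewrite -val_eqE /= -{1}(muln1 q) eqn_pmul2l // eq_sym.
set S := o0 |: (o1 |: [set o2]).
set c := [ffun j : 'I_n => j \in S].
have cS : [set j | c j] = S by apply/setP => j; rewrite inE ffunE.
have wc : weight c = 3%N.
  rewrite /weight cS /S !cardsU1 cards1 !inE.
  by rewrite (negPf o01) (negPf o02) (negPf o12).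
have c0 : c != [ffun => false].
  apply/negP => /eqP h; have : c o0 by rewrite ffunE !inE eqxx.
  by rewrite h ffunE.
have key : forall t : 'I_n, [exists a, in_cyc_coset n (i a) t] ->
    exists K, beta ^+ t = gam ^+ (2 ^ K).
  move=> t /existsP[a /existsP[k /eqP Hk]].
  have /existsP[k' /eqP Hk'] := i_in_r a.
  exists (k' + k)%N.
  rewrite -(prim_expr_mod beta_prim) -Hk modn_dvdm //.
  rewrite -modnMml -Hk' modnMml -mulnA -expnD prim_expr_mod // exprM //.
have cC : c \in C.
  rewrite inE; apply: Gdvd => t /key [K HK].
  rewrite /root word_poly_horner cS /S big_setU1 /=; last by rewrite !inE negb_or o01.
  rewrite big_setU1 /=; last by rewrite !inE.
  have E : alpha ^+ t ^+ q = gam ^+ (2 ^ K) by rewrite exprAC HK.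
  rewrite big_set1 /= expr0 exprM E (exprAC gam (2 ^ K) w) -wE.
  rewrite -{1}(expr1n F (2 ^ K)) -!frob // addrA addrr_pchar2 //.
  by rewrite expr0n expn_eq0.
split.
  by rewrite -wc; apply: bigmin_le; [exact: mem_index_enum | rewrite cC c0].
move=> gcd1.
have alpha0 : alpha != 0.
  apply/negP => /eqP h; have := prim_expr_order alpha_prim.
  rewrite h expr0n; have -> : (n == 0%N) = false by apply/negbTE; rewrite -lt0n.
  by move=> /eqP; rewrite eq_sym oner_eq0.
set a0 : 'I_s := Ordinal s_pos.
have lb : forall d, d \in C -> d != [ffun => false] -> (3 <= weight d)%N.
  move=> d; rewrite inE => dC dn0.
  have R : forall a, \sum_(j in [set j | d j]) (alpha ^+ i a) ^+ j = 0.
    by move=> a; rewrite -word_poly_horner; apply/eqP; apply: rootG.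
  rewrite /weight; case: (ltnP 2 #|[set j | d j]|) => // small.
  move: small R; rewrite leq_eqVlt ltnS leq_eqVlt ltnS leqn0.
  case/or3P.
  - case/cards2P => j [k [jk ->]] R.
    have E : forall a, (i a * j = i a * k %[mod n])%N.
      move=> a; apply/eqP; rewrite -(eq_prim_root_expr alpha_prim) !exprM.
      move: (R a); rewrite big_setU1 /= ?inE // big_set1.
      by move/eqP; rewrite addr_eq0 oppr_pchar2.
    have cop : coprime n (\big[gcdn/0%N]_(a < s) i a) by rewrite /coprime gcd1.
    case: (ltngtP j k) => [lt|lt|/val_inj eq]; last by rewrite eq eqxx in jk.
      by case: (@no_weight2 n s i j k cop lt (ltn_ord k) E).
    by case: (@no_weight2 n s i k j cop lt (ltn_ord j)) => a; rewrite E.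
  - case/cards1P => j -> R; move: (R a0); rewrite big_set1 => /eqP.
    by rewrite !expf_eq0 (negPf alpha0) !andbF.
  - move/eqP/cards0_eq => A0; case/negP: dn0; apply/eqP/ffunP => j.
    rewrite ffunE; apply/negP => dj.
    have : j \in [set j | d j] by rewrite inE.
    by rewrite A0 inE.
have H3 : (3 <= min_dist C)%N.
  rewrite /min_dist; elim/big_ind: _ => [|x y hx hy|d /andP[dC dn]].
  - exact: leq_trans m3 mn.
  - by rewrite leq_min hx hy.
  - exact: lb.
apply/eqP; rewrite eqn_leq H3 andbT.
by rewrite -wc; apply: bigmin_le; [exact: mem_index_enum | rewrite cC c0].
Qed.
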